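(* Let $k\in\mathbb{Z}$, let $n\ge 0$ be an integer, and let $m$ be an odd positive integer. Then $$G_{n}^{(k)}(x)=\sum_{l=0}^{n}\binom{n}{l}m^{l-1}\sum_{j=1}^{n-l+1}\sum_{s=0}^{m-1}(-1)^{s}G_{l}\Big(\frac{s+x}{m}\Big)\frac{1}{j^{k-1}}\frac{S_{1}(n-l+1,j)}{n-l+1}.$$
   Context: The Genocchi polynomials $G_n(x)$ are defined by $\frac{2t}{e^t+1}e^{xt}=\sum_{n=0}^{\infty}G_n(x)\frac{t^n}{n!}$. For $k\in\mathbb{Z}$, $\mathrm{Ei}_k(x)=\sum_{n=1}^{\infty}\frac{x^n}{n^k(n-1)!}$, and the poly-Genocchi polynomials $G_n^{(k)}(x)$ are defined by $\frac{2\,\mathrm{Ei}_k(\log(1+t))}{e^t+1}e^{xt}=\sum_{n=0}^{\infty}G_n^{(k)}(x)\frac{t^n}{n!}$. $S_1(n,m)$ are the signed Stirling numbers of the first kind: $\frac{(\log(1+t))^m}{m!}=\sum_{n=m}^{\infty}S_1(n,m)\frac{t^n}{n!}$. *)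

(* Defs.v *)
(* Formal power series over a numFieldType R (characteristic 0),
   represented by their coefficient sequences nat -> R. *)
From mathcomp Require Import all_boot all_order all_algebra.
Set Implicit Arguments. Unset Strict Implicit. Unset Printing Implicit Defensive.
Import Order.TTheory GRing.Theory Num.Theory.
Local Open Scope ring_scope.

Section FPS.
Variable R : numFieldType.

Definition fps := nat -> R.

Definition fps_one : fps := fun n => (n == 0%N)%:R.
Definition fps_X : fps := fun n => (n == 1%N)%:R.
Definition fps_add (f g : fps) : fps := fun n => f n + g n.
Definition fps_scale (c : R) (f : fps) : fps := fun n => c * f n.
Definition fps_mul (f g : fps) : fps :=
  fun n => \sum_(i < n.+1) f i * g (n - i)%N.
Definition fps_pow (f : fps) (j : nat) : fps := iter j (fps_mul f) fps_one.

(* multiplicative inverse in R[[t]] (for f 0 <> 0):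
   b_0 = (f 0)^-1,  b_n = - (f 0)^-1 * sum_{i=1}^n f_i b_{n-i}.
   inv_upto f n = [:: b_0; ...; b_n]. *)
Fixpoint inv_upto (f : fps) (n : nat) : seq R :=
  match n with
  | 0%N => [:: (f 0%N)^-1]
  | n'.+1 =>
      let s := inv_upto f n' in
      rcons s (- (f 0%N)^-1 * \sum_(1 <= i < n'.+2) f i * nth 0 s (n'.+1 - i)%N)
  end.
Definition fps_inv (f : fps) : fps := fun n => nth 0 (inv_upto f n) n.

(* composition f(g(t)), for g 0 = 0 *)
Definition fps_comp (f g : fps) : fps :=
  fun n => \sum_(j < n.+1) f j * fps_pow g j n.

Definition fps_exp (c : R) : fps := fun n => c ^+ n / (n`!)%:R.
Definition fps_log1p : fps :=
  fun n => if n is 0%N then 0 else (-1) ^+ n.+1 / n%:R.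
Definition fps_Ei (k : int) : fps :=
  fun n => if n is 0%N then 0 else ((n%:R : R) ^ k * (n.-1)`!%:R)^-1.

Definition fps_inv_exp1 : fps := fps_inv (fps_add (fps_exp 1) fps_one).

(* Genocchi polynomials: 2t/(e^t+1) e^{xt} = sum G_n(x) t^n/n! *)
Definition genocchi (n : nat) (x : R) : R :=
  (n`!)%:R * fps_mul (fps_mul (fps_scale 2 fps_X) fps_inv_exp1) (fps_exp x) n.

(* poly-Genocchi polynomials:
   2 Ei_k(log(1+t))/(e^t+1) e^{xt} = sum G_n^{(k)}(x) t^n/n! *)
Definition poly_genocchi (k : int) (n : nat) (x : R) : R :=
  (n`!)%:R *
  fps_mul (fps_mul (fps_scale 2 (fps_comp (fps_Ei k) fps_log1p)) fps_inv_exp1)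
          (fps_exp x) n.

(* signed Stirling numbers of the first kind:
   (log(1+t))^m / m! = sum_{n>=m} S1(n,m) t^n/n! *)
Definition stirling1 (n m : nat) : R :=
  (n`!)%:R / (m`!)%:R * fps_pow fps_log1p m n.

End FPS.

(* Main.v *)
Require Import Defs.
From mathcomp Require Import all_boot all_order all_algebra ring.
From Stdlib Require Import FunctionalExtensionality.
Set Implicit Arguments. Unset Strict Implicit. Unset Printing Implicit Defensive.
Import Order.TTheory GRing.Theory Num.Theory.
Local Open Scope ring_scope.


Section Lemmas.
Variable R : numFieldType.
Local Notation M := (@fps_mul R).
Local Notation A := (@fps_add R).
Local Notation S := (@fps_scale R).
Local Notation E := (@fps_exp R).
Local Notation one := (fps_one R).
Local Notation X := (fps_X R).

Definition P (f : fps R) n : {poly R} := \poly_(i < n.+1) f i.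
Lemma coefP f n i : (i <= n)%N -> (P f n)`_i = f i.
Proof. by move=> h; rewrite /P coef_poly ltnS h. Qed.

Lemma mul_coef f g n (p q : {poly R}) :
  (forall i, (i <= n)%N -> p`_i = f i) -> (forall i, (i <= n)%N -> q`_i = g i) ->
  M f g n = (p * q)`_n.
Proof.
move=> hp hq; rewrite coefM /fps_mul; apply: eq_bigr => i _.
by rewrite hp ?hq // ?leq_subr // -ltnS.
Qed.

Lemma fmulC f g : M f g = M g f.
Proof.
apply: functional_extensionality => n.
rewrite (@mul_coef f g n (P f n) (P g n)); try by move=> i; apply: coefP.
rewrite mulrC; symmetry; apply: mul_coef => i; exact: coefP.
Qed.

Lemma fmulA f g h : M (M f g) h = M f (M g h).
Proof.
apply: functional_extensionality => n.
rewrite (@mul_coef _ h n (P f n * P g n) (P h n)); last by move=> i; apply: coefP.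
  rewrite -mulrA; symmetry; apply: mul_coef; first by move=> i; apply: coefP.
  move=> i hi; symmetry; apply: mul_coef => j hj; apply: coefP; exact: leq_trans hi.
move=> i hi; symmetry; apply: mul_coef => j hj; apply: coefP; exact: leq_trans hi.
Qed.

Lemma fmulDl f g h : M (A f g) h = A (M f h) (M g h).
Proof.
apply: functional_extensionality => n.
by rewrite /fps_mul /fps_add -big_split /=; apply: eq_bigr => i _; rewrite mulrDl.
Qed.

Lemma fmulZl c f g : M (S c f) g = S c (M f g).
Proof.
apply: functional_extensionality => n.
by rewrite /fps_mul /fps_scale mulr_sumr; apply: eq_bigr => i _; rewrite mulrA.
Qed.

Lemma fmul1l f : M one f = f.
Proof.
apply: functional_extensionality => n.
rewrite /fps_mul big_ord_recl /= /fps_one /= mul1r subn0 big1 ?addr0 // => i _.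
by rewrite /bump /= mul0r.
Qed.

Lemma fmulXl f n : M X f n = if n is n'.+1 then f n' else 0.
Proof.
rewrite /fps_mul /fps_X; case: n => [|n]; first by rewrite big_ord1 mul0r.
rewrite big_ord_recl /= mul0r add0r big_ord_recl /= mul1r subSS subn0.
rewrite big1 ?addr0 // => i _; by rewrite mul0r.
Qed.

Lemma fmul0 f g : M f g 0%N = f 0%N * g 0%N.
Proof. by rewrite /fps_mul big_ord1. Qed.

Lemma fmulsuml (I : finType) (F : I -> fps R) g :
  M (fun L => \sum_(s : I) F s L) g = fun L => \sum_(s : I) M (F s) g L.
Proof.
apply: functional_extensionality => n.
rewrite /fps_mul; under eq_bigr do rewrite mulr_suml.
by rewrite exchange_big.
Qed.

Lemma expM a b : M (E a) (E b) = E (a + b).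
Proof.
apply: functional_extensionality => n.
rewrite /fps_mul /fps_exp addrC exprDn mulr_suml; apply: eq_bigr => i _.
have hi : (i <= n)%N by rewrite -ltnS.
have := bin_fact hi => /(congr1 (fun z => z%:R : R)); rewrite !natrM => <-.
rewrite -mulr_natr.
have h1 : (i`!%:R : R) != 0 by rewrite pnatr_eq0 -lt0n fact_gt0.
have h2 : ((n - i)`!%:R : R) != 0 by rewrite pnatr_eq0 -lt0n fact_gt0.
by field; rewrite h1 h2 pnatr_eq0 -lt0n bin_gt0 hi.
Qed.

Definition sc (c : R) (f : fps R) : fps R := fun L => c ^+ L * f L.

Lemma sc_mul c f g : sc c (M f g) = M (sc c f) (sc c g).
Proof.
apply: functional_extensionality => n.
rewrite /sc /fps_mul mulr_sumr; apply: eq_bigr => i _.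
have hi : (i <= n)%N by rewrite -ltnS.
by rewrite -{1}(subnKC hi) exprD; ring.
Qed.

Lemma sc_exp c a : sc c (E a) = E (c * a).
Proof.
by apply: functional_extensionality => n; rewrite /sc /fps_exp exprMn mulrA.
Qed.

Lemma sc_add c f g : sc c (A f g) = A (sc c f) (sc c g).
Proof. by apply: functional_extensionality => n; rewrite /sc /fps_add mulrDr. Qed.

Lemma sc_one c : sc c one = one.
Proof.
by apply: functional_extensionality => -[|n]; rewrite /sc /fps_one /= ?mulr0 ?mulr1.
Qed.

End Lemmas.


Section Lemmas2.
Variable R : numFieldType.
Local Notation M := (@fps_mul R).
Local Notation A := (@fps_add R).
Local Notation S := (@fps_scale R).
Local Notation E := (@fps_exp R).
Local Notation one := (fps_one R).
Local Notation X := (fps_X R).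

Lemma size_inv (f : fps R) n : size (inv_upto f n) = n.+1.
Proof. by elim: n => [|n IH] //=; rewrite size_rcons IH. Qed.

Lemma nth_inv (f : fps R) n i : (i <= n)%N -> nth 0 (inv_upto f n) i = fps_inv f i.
Proof.
elim: n => [|n IH] hi; first by move: hi; rewrite leqn0 => /eqP ->.
rewrite leq_eqVlt in hi; case/orP: hi => [/eqP -> //|hi].
by rewrite /= nth_rcons size_inv hi IH.
Qed.

Lemma inv_ok (f : fps R) : f 0%N != 0 -> M f (fps_inv f) = one.
Proof.
move=> h0; apply: functional_extensionality => -[|n].
  by rewrite fmul0 /fps_inv /= divff.
rewrite /fps_mul big_ord_recl subn0.
have -> : fps_inv f n.+1 = - (f 0%N)^-1 *
   \sum_(i < n.+1) f i.+1 * fps_inv f (n.+1 - i.+1)%N.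
  rewrite {1}/fps_inv /= nth_rcons size_inv ltnn eqxx big_add1 /= big_mkord.
  congr (_ * _); apply: eq_bigr => i _; rewrite nth_inv //.
  by rewrite subSS leq_subr.
rewrite /fps_one /= mulrA mulrN divff // mulN1r.
by rewrite (eq_bigr (fun i : 'I_n.+1 => f i.+1 * fps_inv f (n.+1 - i.+1)%N)) ?addNr.
Qed.

Lemma telescope (u : nat -> R) m :
  \sum_(s < m) (-1) ^+ s * (u s.+1 + u s) = u 0%N - (-1) ^+ m * u m.
Proof.
elim: m => [|m IH]; first by rewrite big_ord0 expr0 mul1r subrr.
rewrite big_ord_recr /= IH exprS; ring.
Qed.

Definition Bf : fps R := A (E 1) one.
Definition Iinv : fps R := fps_inv_exp1 R.

Lemma BI : M Bf Iinv = one.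
Proof.
apply: inv_ok; rewrite /Bf /fps_add /fps_exp /fps_one /=.
by rewrite expr0 fact0 divr1 (_ : 1 + 1 = 2%:R) // pnatr_eq0.
Qed.

Lemma E0 : E 0 = one.
Proof.
apply: functional_extensionality => -[|n]; rewrite /fps_exp /fps_one /= ?expr0 ?divr1 //.
by rewrite expr0n /= mul0r.
Qed.

Lemma fmulC' f g : M f g = M g f. Proof. exact: fmulC. Qed.

Section Odd.
Variable m : nat.
Hypothesis hm : (0 < m)%N.
Hypothesis hodd : odd m.

Definition T : fps R := fun L => \sum_(s < m) S ((-1) ^+ s) (E s%:R) L.

Lemma TB : M T Bf = A (E m%:R) one.
Proof.
rewrite /T fmulsuml; apply: functional_extensionality => L.
under eq_bigr do rewrite fmulZl /Bf fmulC fmulDl fmulC expM fmul1l.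
rewrite (eq_bigr (fun s : 'I_m => (-1) ^+ s * ((fun k => E k%:R L) s.+1 + (fun k => E k%:R L) s))); last first.
  by move=> i _; unfold fps_scale, fps_add; rewrite natr1.
rewrite (telescope (fun k => E k%:R L)) -signr_odd hodd expr1 mulN1r opprK E0 addrC.
by unfold fps_add.
Qed.

Definition Imf : fps R := sc m%:R Iinv.

Lemma BmIm : M (A (E m%:R) one) Imf = one.
Proof.
have -> : A (E m%:R) one = sc m%:R Bf by rewrite /Bf sc_add sc_exp mulr1 sc_one.
by rewrite /Imf -sc_mul BI sc_one.
Qed.

Lemma TIm : M T Imf = Iinv.
Proof.
transitivity (M Iinv (M (M T Bf) Imf)).
  rewrite -[LHS]fmul1l -BI [M Bf Iinv]fmulC !fmulA; congr (M Iinv _).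
  by rewrite -!fmulA [M Bf T]fmulC.
by rewrite TB BmIm fmulC fmul1l.
Qed.

End Odd.
End Lemmas2.


Section Lemmas3.
Variable R : numFieldType.
Local Notation M := (@fps_mul R).
Local Notation A := (@fps_add R).
Local Notation S := (@fps_scale R).
Local Notation E := (@fps_exp R).
Local Notation one := (fps_one R).
Local Notation X := (fps_X R).
Variable m : nat.
Hypothesis hm : (0 < m)%N.
Hypothesis hodd : odd m.

Lemma m0 : (m%:R : R) != 0. Proof. by rewrite pnatr_eq0 -lt0n. Qed.

Lemma key x L : M (Iinv R) (E x) L =
  \sum_(s < m) (-1) ^+ s * ((m%:R : R) ^+ L * M (Iinv R) (E ((s%:R + x) / m%:R)) L).
Proof.
transitivity (M (Imf R m) (M (T R m) (E x)) L).
  by rewrite -fmulA [M (Imf R m) _]fmulC TIm.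
have -> : M (T R m) (E x) = fun L => \sum_(s < m) S ((-1) ^+ s) (E (s%:R + x)) L.
  by rewrite /T fmulsuml; apply: functional_extensionality => L';
    apply: eq_bigr => s _; rewrite fmulZl expM.
rewrite fmulC fmulsuml; apply: eq_bigr => s _.
rewrite fmulZl; unfold fps_scale; congr (_ * _).
have -> : E (s%:R + x) = sc m%:R (E ((s%:R + x) / m%:R)).
  by rewrite sc_exp mulrC divfK // m0.
by rewrite /Imf -sc_mul /sc fmulC.
Qed.

Lemma genoE y : M (M (S 2 X) (Iinv R)) (E y) = S 2 (M X (M (Iinv R) (E y))).
Proof. by rewrite fmulZl fmulZl fmulA. Qed.

Lemma geno0 y : genocchi 0 y = 0 :> R.
Proof.
rewrite /genocchi -/(Iinv R) genoE /fps_scale fmulXl; by rewrite mulr0 mulr0.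
Qed.

Lemma genoS l y : genocchi l.+1 y = l.+1`!%:R * (2 * M (Iinv R) (E y) l) :> R.
Proof. by rewrite /genocchi -/(Iinv R) genoE /fps_scale fmulXl. Qed.

Lemma Hval x l : S 2 (M X (M (Iinv R) (E x))) l =
  (m%:R : R) ^ (l%:Z - 1) *
    \sum_(s < m) (-1) ^+ s * genocchi l ((s%:R + x) / m%:R) / l`!%:R.
Proof.
rewrite /fps_scale fmulXl; case: l => [|l].
  by rewrite mulr0 big1 ?mulr0 // => s _; rewrite geno0 mulr0 mul0r.
have -> : (l.+1%:Z - 1) = l%:Z by rewrite -addn1 PoszD addrK.
rewrite -exprnP key mulr_sumr mulr_sumr; apply: eq_bigr => s _.
rewrite genoS.
have h : (l.+1`!%:R : R) != 0 by rewrite pnatr_eq0 -lt0n fact_gt0.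
by field.
Qed.

End Lemmas3.


Section Lemmas4.
Variable R : numFieldType.
Local Notation M := (@fps_mul R).
Local Notation A := (@fps_add R).
Local Notation S := (@fps_scale R).
Local Notation E := (@fps_exp R).
Local Notation one := (fps_one R).
Local Notation X := (fps_X R).
Variable k : int.
Local Notation C := (fps_comp (fps_Ei R k) (fps_log1p R)).
Definition D : fps R := fun N => C N.+1.

Lemma CXD : C = M X D.
Proof.
apply: functional_extensionality => -[|n]; rewrite fmulXl //.
by rewrite /fps_comp big_ord1 /fps_Ei mul0r.
Qed.

Lemma Dval N : D N = (N`!%:R)^-1 *
  \sum_(1 <= j < N.+2) (((j%:R : R) ^ (k - 1))^-1 * (stirling1 R N.+1 j / N.+1%:R)).
Proof.
rewrite /D /fps_comp big_ord_recl {1}/fps_Ei mul0r add0r big_add1 /= big_mkord.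
rewrite mulr_sumr; apply: eq_bigr => i _.
rewrite /fps_Ei /stirling1 /=.
have hj : ((i.+1)%:R : R) != 0 by rewrite pnatr_eq0.
have -> : ((i.+1)%:R : R) ^ k = ((i.+1)%:R : R) ^ (k - 1) * (i.+1)%:R.
  by rewrite -[X in _ = _ * X]expr1z -exprzDr ?unitfE // subrK.
have ha : ((i.+1)%:R : R) ^ (k - 1) != 0 by rewrite expfz_eq0 negb_and hj orbT.
rewrite ?add0n.
rewrite !factS !natrM.
have h1 : (i`!%:R : R) != 0 by rewrite pnatr_eq0 -lt0n fact_gt0.
have h2 : (N`!%:R : R) != 0 by rewrite pnatr_eq0 -lt0n fact_gt0.
have h3 : ((N.+1)%:R : R) != 0 by rewrite pnatr_eq0.
field.
by rewrite !(addrC 1) !natr1 ha h1 h2 h3 hj.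
Qed.

End Lemmas4.


Theorem theorem6 (R : numFieldType) (k : int) (n m : nat) (x : R)
  (hm_pos : (0 < m)%N) (hm_odd : odd m) :
  poly_genocchi k n x =
  \sum_(l < n.+1)
    'C(n, l)%:R * (m%:R : R) ^ (l%:Z - 1) *
    \sum_(1 <= j < (n - l).+2)
      \sum_(s < m)
        (-1) ^+ s * genocchi l ((s%:R + x) / m%:R)
        * ((j%:R : R) ^ (k - 1))^-1
        * (stirling1 R (n - l).+1 j / (n - l).+1%:R).
Proof.
rewrite /poly_genocchi -/(Iinv R) CXD.
have -> : fps_mul (fps_mul (fps_scale 2 (fps_mul (fps_X R) (D R k))) (Iinv R)) (fps_exp x)
   = fps_mul (fps_scale 2 (fps_mul (fps_X R) (fps_mul (Iinv R) (fps_exp x)))) (D R k).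
  rewrite !fmulZl !fmulA; f_equal; f_equal.
  by rewrite fmulC fmulA.
set H := fps_scale _ _.
rewrite /fps_mul mulr_sumr; apply: eq_bigr => l _.
rewrite /H (Hval hm_pos hm_odd) Dval.
have hl : (l <= n)%N by rewrite -ltnS.
set F := fun s : 'I_m => (-1) ^+ s * genocchi l ((s%:R + x) / m%:R).
set G := fun j : nat => ((j%:R : R) ^ (k - 1))^-1 * (stirling1 R (n - l).+1 j / (n - l).+1%:R).
rewrite [in RHS](eq_bigr (fun j => (\sum_(s < m) F s) * G j)); last first.
  move=> j _; rewrite mulr_suml; apply: eq_bigr => s _.
  by rewrite /F /G !mulrA.
rewrite -mulr_sumr -mulr_suml.
have := bin_fact hl => /(congr1 (fun z => z%:R : R)); rewrite !natrM => <-.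
have h1 : (l`!%:R : R) != 0 by rewrite pnatr_eq0 -lt0n fact_gt0.
have h2 : ((n - l)`!%:R : R) != 0 by rewrite pnatr_eq0 -lt0n fact_gt0.
rewrite /F /G.
by field; rewrite h1 h2.
Qed.
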